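(* Let $\rho\in\mathcal C$. For every $n\ge1$ let $\pi_n$ be a random permutation in $S_n$ with law $\mathbb P_n$ such that for every positive integer $l$, \[ \lim_{n\to\infty}\sup_{\mathbf p,\mathbf q\in\mathcal S(n,l)}\left|\frac{n^l\,\mathbb P_n(\pi_n(\mathbf p)=\mathbf q)}{\prod_{a=1}^l\rho\left(\frac{p_a}{n},\frac{q_a}{n}\right)}-1\right|=0. \] Let $\sigma_n\in S_n$ be deterministic permutations such that $\nu_{\sigma_n}$ converges weakly to a probability measure $\mu$ on $[0,1]^2$. Let $N_n(\pi_n,\sigma_n)=\sum_{i=1}^n 1\{\pi_n(i)=\sigma_n(i)\}$ and $\mu[\rho]=\int_{[0,1]^2}\rho\,d\mu$. Then for every $k\in\mathbb N$, $\lim_{n\to\infty}\mathbb E\,N_n(\pi_n,\sigma_n)^k=\mathbb E\,\mathrm{Poi}(\mu[\rho])^k$, where $\mathrm{Poi}(\lambda)$ denotes a Poisson random variable with mean $\lambda$. In particular $N_n(\pi_n,\sigma_n)$ converges in distribution to $\mathrm{Poi}(\mu[\rho])$.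
   Context: $[n]=\{1,\dots,n\}$. $\mathcal S(n,l)=\{\mathbf p=(p_1,\dots,p_l)\in[n]^l: p_a\ne p_b \text{ for } a\ne b\}$; for a permutation $\pi_n$, $\pi_n(\mathbf p)=(\pi_n(p_1),\dots,\pi_n(p_l))$. For $\sigma\in S_n$, $\nu_{\sigma}=\frac1n\sum_{i=1}^n\delta_{(i/n,\sigma(i)/n)}$. $\mathcal C$ is the set of strictly positive continuous functions $\rho$ on $[0,1]^2$ with $\int_0^1\rho(x,y)\,dx=\int_0^1\rho(x,y)\,dy=1$ for all $x,y$. *)

(* Defs.v *)
From HB Require Import structures.
From mathcomp Require Import all_boot all_order all_algebra all_fingroup.
From mathcomp Require Import all_classical all_reals all_analysis.
Set Implicit Arguments. Unset Strict Implicit. Unset Printing Implicit Defensive.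
Import Order.TTheory GRing.Theory Num.Theory.
Import numFieldNormedType.Exports.
Local Open Scope classical_set_scope.
Local Open Scope ring_scope.

Section Defs.
Context {R : realType}.

Definition sq01 : set (R * R) := `[0, 1] `*` `[0, 1].

Definition classC (rho : R * R -> R) : Prop :=
  {within sq01, continuous rho} /\
  (forall z, sq01 z -> 0 < rho z) /\
  (forall y, y \in `[0, 1] ->
     (\int[lebesgue_measure]_(x in `[0%R, 1%R]) (rho (x, y))%:E = 1)%E) /\
  (forall x, x \in `[0, 1] ->
     (\int[lebesgue_measure]_(y in `[0%R, 1%R]) (rho (x, y))%:E = 1)%E).

(* A law on S_m is a nonnegative function on 'S_m summing to 1.
   Elements of [m] = {1..m} are represented by i : 'I_m standing for i+1. *)
Definition is_law m (P : {ffun 'S_m -> R}) : Prop :=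
  (forall s, 0 <= P s) /\ \sum_(s : 'S_m) P s = 1.

Definition prob_map m l (P : {ffun 'S_m -> R}) (p q : 'I_l -> 'I_m) : R :=
  \sum_(s : 'S_m | [forall a, s (p a) == q a]) P s.

Definition grid_pt m (i j : 'I_m) : R * R :=
  ((i.+1)%:R / m%:R, (j.+1)%:R / m%:R).

Definition ncoinc m (s t : 'S_m) : nat := \sum_(i : 'I_m) (s i == t i).

Definition moment m (P : {ffun 'S_m -> R}) (t : 'S_m) (k : nat) : R :=
  \sum_(s : 'S_m) P s * ((ncoinc s t)%:R ^+ k).

Definition prob_ncoinc m (P : {ffun 'S_m -> R}) (t : 'S_m) (j : nat) : R :=
  \sum_(s : 'S_m | ncoinc s t == j) P s.

Definition poisson_moment (lam : R) (k : nat) : \bar R :=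
  (\sum_(j <oo) (poisson_pmf lam j * (j%:R ^+ k))%:E)%E.

End Defs.

(* Main.v *)
Require Import Defs.
From HB Require Import structures.
From mathcomp Require Import all_boot all_order all_algebra all_fingroup.
From mathcomp Require Import all_classical all_reals all_analysis.
From mathcomp Require Import zify ring lra.
Import Order.TTheory GRing.Theory Num.Theory.
Import numFieldNormedType.Exports.
Local Open Scope ring_scope.
Lemma ncoinc_card m (s t : 'S_m) : ncoinc s t = #|[pred i | s i == t i]|.
Proof.
rewrite /ncoinc -sum1_card [RHS]big_mkcond /=.
by apply: eq_bigr => i _; rewrite inE; case: (_ == _).
Qed.

Lemma ffact_ncoinc m r (s t : 'S_m) :
  (ncoinc s t) ^_ r =
  #|[set p : {ffun 'I_r -> 'I_m} | injectiveb p && [forall a, s (p a) == t (p a)]]|.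
Proof.
rewrite ncoinc_card; have := (@card_inj_ffuns_on (ordinal r) _) [pred i | s i == t i]; rewrite card_ord => <-.
apply: eq_card => p; rewrite !inE andbC; congr (_ && _).
Qed.

Section Fm.
Context {R : realType}.
Lemma fmE m r (P : {ffun 'S_m -> R}) (t : 'S_m) :
  \sum_(s : 'S_m) P s * ((ncoinc s t) ^_ r)%:R =
  \sum_(p : {ffun 'I_r -> 'I_m} | injectiveb p) prob_map P p (fun a => t (p a)).
Proof.
have E s : P s * ((ncoinc s t) ^_ r)%:R =
   \sum_(p : {ffun 'I_r -> 'I_m} | injectiveb p) (if [forall a, s (p a) == t (p a)] then P s else 0).
  rewrite ffact_ncoinc -sum1_card natr_sum big_distrr /= big_mkcond [RHS]big_mkcond /=.
  apply: eq_bigr => p _; rewrite inE.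
  by case: (injectiveb p); case: [forall a, _] => //=; rewrite mulr1.
rewrite (eq_bigr _ (fun s _ => E s)) exchange_big /=.
apply: eq_bigr => p _; rewrite /prob_map [RHS]big_mkcond /=.
by apply: eq_bigr => s _.
Qed.
End Fm.

Local Open Scope classical_set_scope.
Local Open Scope ring_scope.
Lemma ffactD n a b : (n ^_ (a + b) = n ^_ a * (n - a) ^_ b)%N.
Proof.
elim: b => [|b IH]; first by rewrite addn0 ffactn0 muln1.
by rewrite addnS !ffactnSr IH subnDA mulnA.
Qed.

Section Alg.
Context {R : realType}.

Lemma binbin N j i : (('C(N, j) * 'C(N - j, i))%:R : R) =
  (N ^_ (j + i))%:R / (j`! * i`!)%:R.
Proof.
have h : ('C(N, j) * 'C(N - j, i) * (j`! * i`!))%N = N ^_ (j + i).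
  by rewrite ffactD -!bin_ffact mulnACA.
rewrite -h (natrM _ (_ * _)) mulfK //.
Qed.

Lemma ffactS_R (x r : nat) :
  ((x ^_ r.+1)%:R : R) + r%:R * (x ^_ r)%:R = x%:R * (x ^_ r)%:R.
Proof.
rewrite -!natrM -natrD ffactnSr; congr (_%:R).
case: (leqP r x) => hr.
  set f := x ^_ r; nia.
by rewrite ffact_small // !muln0 mul0n.
Qed.

Lemma pow_ffact k : exists c : nat -> R,
  forall x : nat, x%:R ^+ k = \sum_(r < k.+1) c r * (x ^_ r)%:R.
Proof.
elim: k => [|k [c Hc]].
  exists (fun _ => 1) => x; by rewrite big_ord1 ffactn0 expr0 mul1r.
exists (fun r => (if r is r'.+1 then c r' else 0) + (if (r < k.+1)%N then r%:R * c r else 0)).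
move=> x; rewrite exprS Hc big_distrr /=.
under [RHS]eq_bigr => r _ do rewrite mulrDl.
rewrite [RHS]big_split /= [X in _ = X + _]big_ord_recl [X in _ = _ + X]big_ord_recr /= ltnn !mul0r add0r addr0.
rewrite -big_split /=; apply: eq_bigr => r _.
rewrite /bump /= add0n add1n ltn_ord mulrCA -ffactS_R mulrDr.
by rewrite mulrCA mulrA.
Qed.

Lemma altbin M T : \sum_(i < T.+1) (-1)^+i * ('C(M.+1, i))%:R = (-1)^+T * ('C(M, T))%:R :> R.
Proof.
elim: T => [|T IH]; first by rewrite big_ord1 !expr0 !bin0.
rewrite big_ord_recr /= IH binS natrD exprS !mulN1r mulrDr !mulNr addrCA addrN addr0.
by [].
Qed.

Definition hb (j T N : nat) : R := \sum_(i < T.+1) (-1)^+i * ('C(N, j) * 'C(N - j, i))%:R.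

Lemma hbE j T N : hb j T N =
  if (N < j)%N then 0 else if N == j then 1 else ('C(N, j))%:R * ((-1)^+T * ('C((N - j).-1, T))%:R).
Proof.
rewrite /hb; case: (ltnP N j) => hNj.
  by rewrite big1 // => i _; rewrite bin_small // mul0n mulr0.
case: eqP => [->|/eqP hne].
  rewrite subnn big_ord_recl /= big1 ?expr0 ?bin0 ?binn ?mul1r ?addr0 //.
  by move=> i _; rewrite bin0n /= muln0 mulr0.
have [M hM] : exists M, (N - j)%N = M.+1.
  exists (N - j).-1; rewrite prednK // subn_gt0 ltn_neqAle eq_sym hne hNj //.
rewrite hM /=.
rewrite -altbin big_distrr /=; apply: eq_bigr => i _.
by rewrite natrM mulrCA.
Qed.

Lemma bonf_even j L N : ((N == j)%:R : R) <= hb j (L.*2) N.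
Proof.
rewrite hbE; case: (ltnP N j) => h.
  by rewrite (ltn_eqF h).
case: eqP => // _; rewrite -signr_odd odd_double expr0 mul1r.
by rewrite -natrM ler0n.
Qed.

Lemma bonf_odd j L N : hb j (L.*2.+1) N <= ((N == j)%:R : R).
Proof.
rewrite hbE; case: (ltnP N j) => h.
  by rewrite (ltn_eqF h).
case: eqP => // _; rewrite -signr_odd /= odd_double expr1 mulN1r mulrN -natrM.
by rewrite oppr_le0 ler0n.
Qed.
End Alg.
Section Helpers.
Context {R : realType}.

Lemma cvg_sumR K (u : nat -> nat -> R) (a : nat -> R) :
  (forall i, (i < K)%N -> u i n @[n --> \oo] --> a i) ->
  (\sum_(i < K) u i n) @[n --> \oo] --> \sum_(i < K) a i.
Proof.
elim: K => [|K IH] H.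
  under eq_fun do rewrite big_ord0. rewrite big_ord0; exact: cvg_cst.
under eq_fun do rewrite big_ord_recr /=. rewrite big_ord_recr /=.
apply: cvgD; first by apply: IH => i hi; apply: H; apply: ltnW.
exact: H.
Qed.

Lemma cvg_powR (f : nat -> R) (l : R) r : (f n @[n --> \oo] --> l) ->
  (fun n => f n ^+ r) @ \oo --> l ^+ r.
Proof.
move=> hf; elim: r => [|r IH].
  under eq_fun do rewrite expr0. rewrite expr0; exact: cvg_cst.
under eq_fun do rewrite exprS. rewrite exprS.
exact: cvgM.
Qed.

Lemma bound0 (u v : nat -> R) : (forall n, `|u n| <= v n) ->
  (v n @[n --> \oo] --> 0) -> u n @[n --> \oo] --> 0.
Proof.
move=> huv hv; apply: (@squeeze_cvgr _ _ _ _ (fun n => - v n) v).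
- by near=> n; rewrite -ler_norml huv.
- by rewrite -oppr0; apply: cvgN.
- exact: hv.
Unshelve. all: by end_near. Qed.

Lemma cvg_harm_c (c : R) : (c / n.+1%:R) @[n --> \oo] --> 0.
Proof.
rewrite -(mulr0 c); exact: (cvgM (cvg_cst c) (@cvg_harmonic R)).
Qed.

End Helpers.

Section Rho.
Context {R : realType}.
Variable rho : R * R -> R.
Hypothesis hcont : {within sq01, continuous rho}.
Hypothesis hpos : forall z, sq01 z -> 0 < rho z.

Lemma sq01_compact : compact (sq01 : set (R * R)).
Proof. by apply: compact_setX; exact: segment_compact. Qed.

Lemma sq01_ne0 : (sq01 : set (R * R)) !=set0.
Proof. by exists (0, 0); split; rewrite /= in_itv /= lexx ler01. Qed.

Lemma rho_max : exists M, 0 < M /\ forall z, sq01 z -> rho z <= M.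
Proof.
have [c cA hc] := compact_EVT_max sq01_ne0 sq01_compact hcont.
exists (rho c); split; first by apply: hpos; exact: set_mem.
by move=> z zA; apply: hc; exact: mem_set.
Qed.

Lemma rho_min : exists d, 0 < d /\ forall z, sq01 z -> d <= rho z.
Proof.
have [c cA hc] := compact_EVT_min sq01_ne0 sq01_compact hcont.
exists (rho c); split; first by apply: hpos; exact: set_mem.
by move=> z zA; apply: hc; exact: mem_set.
Qed.
End Rho.

Lemma grid_in {R : realType} m (i j : 'I_m) : (sq01 : set (R * R)) (grid_pt i j).
Proof.
have h (k : 'I_m) : (k.+1%:R / m%:R : R) \in `[0, 1].
  have m0 : (0 < m%:R :> R) by rewrite ltr0n (leq_ltn_trans _ (ltn_ord k)).
  rewrite in_itv /= divr_ge0 ?ler0n //= ler_pdivrMr // mul1r ler_nat.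
  exact: ltn_ord.
by split; apply: h.
Qed.

Lemma ffact_gap m r : ((m ^ r - m ^_ r) * m <= r * r * m ^ r)%N.
Proof.
elim: r => [|r IH]; first by rewrite expn0 ffactn0 subnn.
have hF : (m ^_ r <= m ^ r)%N.
  elim: r {IH} => [|r IH']; first by rewrite ffactn0 expn0.
  by rewrite ffactnSr expnS mulnC leq_mul // leq_subr.
rewrite ffactnSr expnS.
case: (leqP r m) => hr.
  set F := m ^_ r in IH hF *; set X := (m ^ r)%N in IH hF *.
  have e1 : (m * X - F * (m - r) = (X - F) * m + F * r)%N.
    have : (F * (m - r) <= F * m)%N by rewrite leq_mul2l leq_subr orbT.
    rewrite mulnBr mulnBl; move: hF; set Fm := (F * m)%N; set Fr := (F * r)%N; nia.
  rewrite e1 mulnDl.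
  have h1 : ((X - F) * m * m <= r * r * (m * X))%N.
    by rewrite [(m * X)%N]mulnC mulnA leq_mul2r IH orbT.

  have h2 : (F * r * m <= r * (m * X))%N.
    have : (F * (r * m) <= X * (r * m))%N by rewrite leq_mul2r hF orbT.
    move=> h; nia.
  set A := ((X - F) * m * m)%N in h1 *; set B := (F * r * m)%N in h2 *; set C := (m * X)%N in h1 h2 *.
  nia.
rewrite ffact_small // mul0n subn0.
set X := (m ^ r)%N in IH hF *.
nia.
Qed.

Lemma card_noninj m r :
  (#|[pred p : {ffun 'I_r -> 'I_m} | ~~ injectiveb p]| * m <= r * r * m ^ r)%N.
Proof.
have h := cardC [pred p : {ffun 'I_r -> 'I_m} | injectiveb p].
rewrite card_ffun !card_ord in h.
have hinj : #|[pred p : {ffun 'I_r -> 'I_m} | injectiveb p]| = m ^_ r.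
  have := card_inj_ffuns 'I_r 'I_m; rewrite !card_ord => <-.
  by apply: eq_card => p; rewrite !inE.
have -> : #|[pred p : {ffun 'I_r -> 'I_m} | ~~ injectiveb p]| = (m ^ r - m ^_ r)%N.
  rewrite -h hinj addKn; apply: eq_card => p; by rewrite !inE.
exact: ffact_gap.
Qed.
Section Pois.
Context {R : realType}.
Variable lam : R.
Hypothesis lam0 : 0 < lam.

Lemma expR_series (x : R) : series (exp_coeff x) @ \oo --> expR x.
Proof. exact: (is_cvg_series_exp_coeff x). Qed.

Lemma pois_ffact r :
  series (fun j => poisson_pmf lam j * (j ^_ r)%:R) @ \oo --> lam ^+ r.
Proof.
rewrite -(cvg_shiftn r).
have e : (fun n => series (fun j => poisson_pmf lam j * (j ^_ r)%:R) (n + r)%N) =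
   (fun n => expR (- lam) * lam ^+ r * series (exp_coeff lam) n).
  apply/funext => n; rewrite /series /=.
  rewrite (@big_cat_nat _ _ _ r) ?leq_addl //=.
  rewrite [X in X + _]big_nat big1 ?add0r; last first.
    by move=> i /andP[_ hi]; rewrite ffact_small // mulr0.
  rewrite -{1}(add0n r) big_addn addnK big_distrr /=; apply: eq_bigr => i _.
  have hf := ffact_fact (leq_addl i r); rewrite addnK in hf.
  have hF : ((i + r) ^_ r)%:R != 0 :> R by rewrite pnatr_eq0 -lt0n ffact_gt0 leq_addl.
  have hi : (i`!)%:R != 0 :> R by rewrite pnatr_eq0 -lt0n fact_gt0.
  rewrite /poisson_pmf lam0 /exp_coeff /= -hf natrM exprD.
  by field; rewrite hF hi.
rewrite e.
have h := cvgM (cvg_cst (expR (- lam) * lam ^+ r)) (expR_series lam).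
have e2 : expR (- lam) * lam ^+ r * expR lam = lam ^+ r.
  by rewrite mulrAC -expRD addNr expR0 mul1r.
rewrite e2 in h; exact: h.
Qed.


Lemma pois_moment k (c : nat -> R) :
  (forall x : nat, x%:R ^+ k = \sum_(r < k.+1) c r * (x ^_ r)%:R) ->
  poisson_moment lam k = (\sum_(r < k.+1) c r * lam ^+ r)%:E.
Proof.
move=> Hc.
have hs : series (fun j => poisson_pmf lam j * j%:R ^+ k) @ \oo -->
    \sum_(r < k.+1) c r * lam ^+ r.
  have -> : series (fun j => poisson_pmf lam j * j%:R ^+ k) = (fun n =>
      \sum_(r < k.+1) c r * series (fun j => poisson_pmf lam j * (j ^_ r)%:R) n).
    apply/funext => n; rewrite /series /=.
    under eq_bigr do rewrite Hc big_distrr /=.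
    rewrite exchange_big /=; apply: eq_bigr => r _; rewrite big_distrr /=.
    by apply: eq_bigr => j _; rewrite mulrCA.
  apply: (@cvg_sumR _ k.+1 (fun r n => c r *
      series (fun j => poisson_pmf lam j * (j ^_ r)%:R) n) (fun r => c r * lam ^+ r)) => r _.
  exact: (cvgM (cvg_cst _) (pois_ffact r)).
rewrite /poisson_moment.
have h : (fun n => (\sum_(0 <= j < n) (poisson_pmf lam j * j%:R ^+ k)%:E)%E) @ \oo -->
    (\sum_(r < k.+1) c r * lam ^+ r)%:E.
  under eq_fun do rewrite sumEFin.
  by apply: cvg_EFin; [exact: nearW | exact: hs].
exact: (cvg_lim (@ereal_hausdorff R) h).
Qed.


Lemma u_cvg j : (fun T => \sum_(i < T.+1) (-1)^+i / (j`! * i`!)%:R * lam ^+ (j + i))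
  @ \oo --> poisson_pmf lam j.
Proof.
have e : (fun T => \sum_(i < T.+1) (-1)^+i / (j`! * i`!)%:R * lam ^+ (j + i)) =
   (fun T => lam ^+ j / j`!%:R * series (exp_coeff (- lam)) T.+1).
  apply/funext => T; rewrite /series /= big_mkord big_distrr /=.
  apply: eq_bigr => i _; rewrite /exp_coeff /= [(- lam) ^+ _]exprNn exprD natrM.
  have hi : (i`!)%:R != 0 :> R by rewrite pnatr_eq0 -lt0n fact_gt0.
  have hj : (j`!)%:R != 0 :> R by rewrite pnatr_eq0 -lt0n fact_gt0.
  by field; rewrite hi hj.
rewrite e /poisson_pmf lam0.
have hs : (fun T => series (exp_coeff (- lam)) T.+1) @ \oo --> expR (- lam).
  have := expR_series (- lam); rewrite -(cvg_shiftn 1) /=.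
  by under eq_fun do rewrite addn1.
exact: (cvgM (cvg_cst _) hs).
Qed.

End Pois.


Section Main.
Context {R : realType}.
Variables (rho : R * R -> R) (P : forall n : nat, {ffun 'S_n.+1 -> R})
  (sigma : forall n : nat, 'S_n.+1) (lam : R).
Hypothesis hcont : {within sq01, continuous rho}.
Hypothesis hpos : forall z, sq01 z -> 0 < rho z.
Hypothesis hlaw : forall n, is_law (P n).
Hypothesis hyp : forall l : nat, (0 < l)%N -> forall eps : R, 0 < eps ->
     \forall n \near \oo,
       forall p q : 'I_l -> 'I_n.+1, injective p -> injective q ->
         `| (n.+1%:R) ^+ l * prob_map (P n) p q
              / \prod_(a < l) rho (grid_pt (p a) (q a)) - 1 | <= eps.
Hypothesis hweak : (fun n => n.+1%:R^-1 * \sum_(i < n.+1) rho (grid_pt i (sigma n i)))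
   @ \oo --> lam.

Let g n (i : 'I_n.+1) := rho (grid_pt i (sigma n i)).
Let fm n r := \sum_(s : 'S_n.+1) P n s * ((ncoinc s (sigma n)) ^_ r)%:R.
Let Pi n r (p : {ffun 'I_r -> 'I_n.+1}) := \prod_(a < r) g n (p a).
Let An n r := n.+1%:R ^- r * \sum_(p : {ffun 'I_r -> 'I_n.+1} | injectiveb p) @Pi n r p.
Let Bn n r := (n.+1%:R^-1 * \sum_(i < n.+1) g n i) ^+ r.

Let g_gt0 n i : 0 < g n i.
Proof. exact/hpos/grid_in. Qed.

Lemma lam_gt0 : 0 < lam.
Proof.
have [d [d0 hd]] := rho_min _ hcont hpos.
apply: (lt_le_trans d0); apply: (cvgr_to_ge hweak); near=> n.
have : d *+ n.+1 <= \sum_(i < n.+1) g n i.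
  rewrite -[n.+1 in X in X <= _](card_ord n.+1) -sumr_const.
  by apply: ler_sum => i _; apply/hd/grid_in.
move=> h; rewrite -mulr_natr in h.
rewrite -(ler_pM2l (_ : 0 < n.+1%:R^-1)) ?invr_gt0 ?ltr0n // in h.
by rewrite mulrCA mulVf ?pnatr_eq0 // mulr1 in h.
Unshelve. all: by end_near. Qed.


Section WithM.
Variable M : R.
Hypothesis M0 : 0 < M.
Hypothesis hM : forall z, sq01 z -> rho z <= M.

Let Pi_gt0 n r p : 0 < @Pi n r p.
Proof. by apply: prodr_gt0 => a _; apply: g_gt0. Qed.

Let Pi_le n r p : @Pi n r p <= M ^+ r.
Proof.
rewrite /Pi -[r in M ^+ r](card_ord r) -prodr_const.
apply: ler_prod => a _; rewrite ltW ?g_gt0 //=; exact/hM/grid_in.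
Qed.

Let sum_Pi_le n r : \sum_(p : {ffun 'I_r -> 'I_n.+1}) @Pi n r p <= n.+1%:R ^+ r * M ^+ r.
Proof.
apply: (@le_trans _ _ (\sum_(p : {ffun 'I_r -> 'I_n.+1}) M ^+ r)).
  by apply: ler_sum => p _; exact: Pi_le.
by rewrite (eq_bigl (fun p => p \in predT)) // sumr_const cardT -cardE card_ffun !card_ord -[X in X <= _]mulr_natl natrX.
Qed.

Let Bn_sum n r : Bn n r = n.+1%:R ^- r * \sum_(p : {ffun 'I_r -> 'I_n.+1}) @Pi n r p.
Proof.
rewrite /Bn exprMn exprVn; congr (_ * _).
rewrite -[r in _ ^+ r](card_ord r) -prodr_const.
exact: bigA_distr_bigA.
Qed.

Let AB_bound n r : `|Bn n r - An n r| <= (r * r)%:R * M ^+ r / n.+1%:R.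
Proof.
have m0 : 0 < n.+1%:R :> R by rewrite ltr0n.
rewrite Bn_sum /An -mulrBr (bigID (fun p : {ffun 'I_r -> 'I_n.+1} => injectiveb p)) /=.
rewrite addrC addrK normrM ger0_norm ?invr_ge0 ?exprn_ge0 ?ler0n //.
rewrite ger0_norm; last by apply: sumr_ge0 => p _; apply/ltW/Pi_gt0.
have h1 : \sum_(p : {ffun 'I_r -> 'I_n.+1} | ~~ injectiveb p) @Pi n r p <=
    (#|[pred p : {ffun 'I_r -> 'I_n.+1} | ~~ injectiveb p]|)%:R * M ^+ r.
  rewrite mulr_natl -sumr_const; apply: ler_sum => p _; exact: Pi_le.
apply: (le_trans (ler_wpM2l _ h1)); first by rewrite invr_ge0 exprn_ge0 // ltW.
have h2 := card_noninj n.+1 r.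
have h3 : (#|[pred p : {ffun 'I_r -> 'I_n.+1} | ~~ injectiveb p]|)%:R * n.+1%:R
   <= (r * r)%:R * n.+1%:R ^+ r :> R.
  by rewrite -natrX -!natrM ler_nat.
set c := (#|_|)%:R in h3 *.
rewrite mulrA [X in _ <= X]mulrAC ler_pM2r ?exprn_gt0 // mulrC.
rewrite ler_pdivlMr // mulrAC ler_pdivrMr ?exprn_gt0 //.
Qed.

Let An_le n r : n.+1%:R ^- r * \sum_(p : {ffun 'I_r -> 'I_n.+1} | injectiveb p) @Pi n r p
   <= M ^+ r.
Proof.
have m0 : 0 < n.+1%:R :> R by rewrite ltr0n.
rewrite mulrC ler_pdivrMr ?exprn_gt0 // mulrC.
apply: le_trans (sum_Pi_le n r).
rewrite [X in _ <= X](bigID (fun p : {ffun 'I_r -> 'I_n.+1} => injectiveb p)) /= lerDl.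
by apply: sumr_ge0 => p _; apply/ltW/Pi_gt0.
Qed.

Let fm_A_bound r (r0 : (0 < r)%N) eps (e0 : 0 < eps) :
  \forall n \near \oo, `|fm n r - An n r| <= eps * M ^+ r.
Proof.
have := hyp r r0 eps e0; apply: filterS => n hn.
have m0 : 0 < n.+1%:R :> R by rewrite ltr0n.
rewrite /fm fmE /An big_distrr /= -sumrB.
apply: (le_trans (ler_norm_sum _ _ _)).
apply: (@le_trans _ _ (\sum_(p : {ffun 'I_r -> 'I_n.+1} | injectiveb p)
    eps * (n.+1%:R ^- r * @Pi n r p))).
  apply: ler_sum => p /injectiveP injp.
  have hq : injective (fun a => sigma n (p a)) by move=> a b /perm_inj /injp.
  have := hn p _ injp hq.
  set Q := prob_map _ _ _.
  have hPi := Pi_gt0 n r p.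
  have -> : Q - n.+1%:R ^- r * @Pi n r p =
      n.+1%:R ^- r * @Pi n r p * (n.+1%:R ^+ r * Q / @Pi n r p - 1).
    field; rewrite ?gt_eqF ?exprn_gt0 //.
  have hge : 0 <= n.+1%:R ^- r * @Pi n r p.
    by rewrite mulr_ge0 ?invr_ge0 ?exprn_ge0 ?ler0n ?(ltW hPi).
  move=> h; rewrite normrM (ger0_norm hge).
  by rewrite [X in _ <= X]mulrC ler_wpM2l.
rewrite -big_distrr /= -big_distrr /= ler_wpM2l ?(ltW e0) //.
Qed.

Lemma fm_cvg_S r : fm n r.+1 @[n --> \oo] --> lam ^+ r.+1.
Proof.
set r' := r.+1.
have h1 : (fun n => fm n r' - An n r') @ \oo --> 0.
  apply/cvgrPdist_le => eps e0.
  have e1 : 0 < eps / M ^+ r' by rewrite divr_gt0 ?exprn_gt0.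
  have := fm_A_bound r' (ltn0Sn r) (eps / M ^+ r') e1; apply: filterS => n hn.
  rewrite sub0r normrN; apply: (le_trans hn).
  by rewrite divfK ?gt_eqF ?exprn_gt0.
have h2 : (fun n => An n r' - Bn n r') @ \oo --> 0.
  apply: (@bound0 _ _ (fun n => (r' * r')%:R * M ^+ r' / n.+1%:R)).
    by move=> n; rewrite distrC; exact: AB_bound.
  exact: cvg_harm_c.
have h3 : (fun n => Bn n r') @ \oo --> lam ^+ r' by exact: cvg_powR hweak.
have e : (fun n => fm n r') = ((fun n => fm n r' - An n r') +
   ((fun n => An n r' - Bn n r') + (fun n => Bn n r'))).
  by apply/funext => n /=; rewrite subrK subrK.
rewrite e -(add0r (lam ^+ r')) -(add0r (lam ^+ r')).
apply: cvgD => //; exact: cvgD.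
Qed.

End WithM.

Lemma fm_cvg r : fm n r @[n --> \oo] --> lam ^+ r.
Proof.
case: r => [|r].
  have -> : (fun n => fm n 0) = (fun=> 1).
    apply/funext => n; rewrite /fm.
    under eq_bigr do rewrite ffactn0 mulr1.
    exact: (hlaw n).2.
  by rewrite expr0; exact: cvg_cst.
have [M [M0 hM]] := rho_max _ hcont hpos.
exact: fm_cvg_S M0 hM r.
Qed.



Lemma moment_eq k (c : nat -> R) :
  (forall x : nat, x%:R ^+ k = \sum_(r < k.+1) c r * (x ^_ r)%:R) ->
  forall n, moment (P n) (sigma n) k = \sum_(r < k.+1) c r * fm n r.
Proof.
move=> Hc n; rewrite /moment /fm.
under eq_bigr do rewrite Hc big_distrr /=.
rewrite exchange_big /=; apply: eq_bigr => r _; rewrite big_distrr /=.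
by apply: eq_bigr => s _; rewrite mulrCA.
Qed.

Lemma moment_cvg k (c : nat -> R) :
  (forall x : nat, x%:R ^+ k = \sum_(r < k.+1) c r * (x ^_ r)%:R) ->
  moment (P n) (sigma n) k @[n --> \oo] --> \sum_(r < k.+1) c r * lam ^+ r.
Proof.
move=> Hc.
have -> : (fun n => moment (P n) (sigma n) k) = (fun n => \sum_(r < k.+1) c r * fm n r).
  by apply/funext => n; exact: moment_eq.
apply: (@cvg_sumR _ k.+1 (fun i n => c i * fm n i) (fun i => c i * lam ^+ i)) => i _.
exact: (cvgM (cvg_cst (c i)) (fm_cvg i)).
Qed.


Lemma EH_eq j T n : \sum_(s : 'S_n.+1) P n s * hb j T (ncoinc s (sigma n)) =
  \sum_(i < T.+1) (-1)^+i / (j`! * i`!)%:R * fm n (j + i).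
Proof.
rewrite /hb /fm; under eq_bigr do rewrite big_distrr /=.
rewrite exchange_big /=; apply: eq_bigr => i _; rewrite big_distrr /=.
apply: eq_bigr => s _; rewrite binbin.
by ring.
Qed.

Lemma EH_cvg j T : (\sum_(s : 'S_n.+1) P n s * hb j T (ncoinc s (sigma n))) @[n --> \oo]
   --> \sum_(i < T.+1) (-1)^+i / (j`! * i`!)%:R * lam ^+ (j + i).
Proof.
have -> : (fun n => \sum_(s : 'S_n.+1) P n s * hb j T (ncoinc s (sigma n))) =
   (fun n => \sum_(i < T.+1) (-1)^+i / (j`! * i`!)%:R * fm n (j + i)).
  by apply/funext => n; exact: EH_eq.
apply: (@cvg_sumR _ T.+1 (fun i n => (-1)^+i / (j`! * i`!)%:R * fm n (j + i))
   (fun i => (-1)^+i / (j`! * i`!)%:R * lam ^+ (j + i))) => i _.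
exact: (cvgM (cvg_cst _) (fm_cvg (j + i))).
Qed.

Lemma prob_eq j n : prob_ncoinc (P n) (sigma n) j =
  \sum_(s : 'S_n.+1) P n s * ((ncoinc s (sigma n) == j)%:R).
Proof.
rewrite /prob_ncoinc big_mkcond /=; apply: eq_bigr => s _.
by case: (_ == _); rewrite ?mulr1 ?mulr0.
Qed.

Lemma prob_bounds j L n :
  \sum_(s : 'S_n.+1) P n s * hb j (L.*2.+1) (ncoinc s (sigma n)) <= prob_ncoinc (P n) (sigma n) j
  <= \sum_(s : 'S_n.+1) P n s * hb j (L.*2) (ncoinc s (sigma n)).
Proof.
rewrite prob_eq; apply/andP; split; apply: ler_sum => s _;
  apply: ler_wpM2l; rewrite ?((hlaw n).1 s) //.
  exact: bonf_odd.
exact: bonf_even.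
Qed.

Lemma prob_cvg j : prob_ncoinc (P n) (sigma n) j @[n --> \oo] --> poisson_pmf lam j.
Proof.
apply/cvgrPdist_le => eps e0.
have e2 : 0 < eps / 2 by rewrite divr_gt0.
have [N _ hN] := (cvgrPdist_le _ _).1 (@u_cvg _ lam lam_gt0 j) (eps / 2) e2.
have d0 : (N <= N.*2)%N by rewrite -addnn leq_addr.
have hN0 := hN (N.*2) d0.
have hN1 := hN (N.*2.+1) (leqW d0).
have c0 := EH_cvg j (N.*2); move/cvgrPdist_le/(_ (eps / 2) e2) in c0.
have c1 := EH_cvg j (N.*2.+1); move/cvgrPdist_le/(_ (eps / 2) e2) in c1.
apply: (@filterS2 _ _ _ _ _ _ _ c0 c1) => n a0 a1.
have /andP[b1 b2] := prob_bounds j N n.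
move: hN0 hN1 a0 a1 b1 b2.
set u0 := \sum_(i < _) _; set u1 := \sum_(i < _) _.
set E0 := \sum_(s : 'S_n.+1) _; set E1 := \sum_(s : 'S_n.+1) _.
set pr := prob_ncoinc _ _ _; set pm := poisson_pmf _ _.
rewrite /= !ler_distl => /andP[h1 h2] /andP[h3 h4] /andP[h5 h6] /andP[h7 h8] b1 b2.
apply/andP; split; lra.
Qed.

End Main.


Theorem theorem1p3 (R : realType) (rho : R * R -> R)
  (P : forall n : nat, {ffun 'S_n.+1 -> R})
  (sigma : forall n : nat, 'S_n.+1)
  (mu : probability (R * R)%type R) :
  classC rho ->
  (forall n, is_law (P n)) ->
  (forall l : nat, (0 < l)%N -> forall eps : R, 0 < eps ->
     \forall n \near \oo,
       forall p q : 'I_l -> 'I_n.+1, injective p -> injective q ->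
         `| (n.+1%:R) ^+ l * prob_map (P n) p q
              / \prod_(a < l) rho (grid_pt (p a) (q a)) - 1 | <= eps) ->
  mu sq01 = 1%E ->
  (forall f : R * R -> R, {within sq01, continuous f} ->
     (fun n => n.+1%:R^-1 * \sum_(i < n.+1) f (grid_pt i (sigma n i)))
       @ \oo --> \int[mu]_(z in sq01) f z) ->
  let lam := \int[mu]_(z in sq01) rho z in
  (forall k : nat,
     (fun n => (moment (P n) (sigma n) k)%:E) @ \oo --> poisson_moment lam k)
  /\
  (forall j : nat,
     (fun n => prob_ncoinc (P n) (sigma n) j) @ \oo --> poisson_pmf lam j).
Proof.
move=> [hcont [hpos _]] hlaw hyp _ hweak lam.
have hw := hweak rho hcont.
have l0 : 0 < lam by exact: (@lam_gt0 _ rho sigma lam hcont hpos hw).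
split.
  move=> k; have [c Hc] := pow_ffact (R:=R) k.
  rewrite (@pois_moment _ lam l0 k c Hc).
  apply: cvg_EFin; first exact: nearW.
  exact: (@moment_cvg _ rho P sigma lam hcont hpos hlaw hyp hw k c Hc).
move=> j.
exact: (@prob_cvg _ rho P sigma lam hcont hpos hlaw hyp hw j).
Qed.
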